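(* Let $H$ be a nonempty graph, let $s\ge 0$ and $t\ge 1$ be integers. Then $\hat r(tK_2,H\cup sK_1)=\hat r(tK_2,H)$. In particular, $\hat r_\infty(H\cup sK_1)=\hat r_\infty(H)$.
   Context: All graphs are finite and simple; a graph is nonempty if it has at least one edge. $G\cup H$ is the disjoint union, $tK_2$ is a matching with $t$ edges, $sK_1$ is the edgeless graph on $s$ vertices. For graphs $F,G,H$, $F\to(G,H)$ means every red--blue coloring of $E(F)$ contains a red copy of $G$ or a blue copy of $H$, and $\hat r(G,H)=\min\{|E(F)|:F\to(G,H)\}$. For a nonempty graph $G$, $\hat r_\infty(G)=\lim_{t\to\infty}\frac{\hat r(tK_2,G)}{t\,|E(G)|}$ (this limit exists). *)

(* Defs.v *)
From Stdlib Require Import Reals.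
From Coquelicot Require Import Rbar Lim_seq.
From mathcomp Require Import all_boot.
From mathcomp Require Import boolp.

Set Implicit Arguments.
Unset Strict Implicit.
Unset Printing Implicit Defensive.

Record graph := Graph {
  gn : nat;
  gadj : rel 'I_gn;
  gsym : symmetric gadj;
  girr : irreflexive gadj }.

Definition nedges (G : graph) : nat :=
  #|[set p : 'I_(gn G) * 'I_(gn G) | (p.1 < p.2)%N && gadj p.1 p.2]|.

(* Matching tK_2 on 'I_(2t): vertices 2i and 2i+1 adjacent. *)
Definition matching_adj (t : nat) : rel 'I_(t.*2) :=
  fun x y => (x./2 == y./2) && (x != y).

Lemma matching_sym t : symmetric (@matching_adj t).
Proof. by move=> x y; rewrite /matching_adj eq_sym [y == x]eq_sym. Qed.

Lemma matching_irr t : irreflexive (@matching_adj t).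
Proof. by move=> x; rewrite /matching_adj !eqxx. Qed.

Definition matching (t : nat) : graph :=
  @Graph t.*2 (@matching_adj t) (@matching_sym t) (@matching_irr t).

(* H ∪ sK_1 : H plus s isolated vertices, on 'I_(gn H + s). *)
Definition addiso_adj (H : graph) (s : nat) : rel 'I_(gn H + s) :=
  fun x y => match split x, split y with
             | inl a, inl b => gadj a b
             | _, _ => false
             end.

Lemma addiso_sym H s : symmetric (@addiso_adj H s).
Proof.
move=> x y; rewrite /addiso_adj.
by case: (split x) => a; case: (split y) => b //; apply: gsym.
Qed.

Lemma addiso_irr H s : irreflexive (@addiso_adj H s).
Proof. by move=> x; rewrite /addiso_adj; case: (split x) => a //; apply: girr. Qed.

Definition add_isolated (H : graph) (s : nat) : graph :=
  @Graph (gn H + s) (@addiso_adj H s) (@addiso_sym H s) (@addiso_irr H s).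

(* A red/blue colouring of E(F): c x y (true = red), required symmetric;
   only its values on edges of F matter. *)
Definition mono_copy (F G : graph) (c : 'I_(gn F) -> 'I_(gn F) -> bool)
  (b : bool) : Prop :=
  exists f : 'I_(gn G) -> 'I_(gn F), injective f /\
    forall x y, gadj x y -> gadj (f x) (f y) && (c (f x) (f y) == b).

Definition arrows (F G H : graph) : Prop :=
  forall c : 'I_(gn F) -> 'I_(gn F) -> bool,
    (forall x y, c x y = c y x) -> @mono_copy F G c true \/ @mono_copy F H c false.

(* size Ramsey number: min |E(F)| over F with F -> (G,H) (0 if no such F,
   which never happens). *)
Definition sr_pred (G H : graph) : pred nat :=
  fun m => `[< exists F : graph, nedges F = m /\ arrows F G H >].

Definition size_ramsey (G H : graph) : nat :=
  match pselect (exists m, sr_pred G H m) with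
  | left ex => ex_minn ex
  | right _ => 0
  end.

Definition r_infty (G : graph) : Rbar :=
  Lim_seq (fun t => (INR (size_ramsey (matching t) G) /
                     (INR t * INR (nedges G)))%R).

(* Main.v *)
Require Import Defs.
From Stdlib Require Import Reals.
From Coquelicot Require Import Rbar Lim_seq.
From mathcomp Require Import all_boot.
From mathcomp Require Import boolp.

Lemma split_l m n (a : 'I_m) : split (@lshift m n a) = inl a.
Proof. exact: (@unsplitK m n (inl a)). Qed.

Lemma split_r m n (b : 'I_n) : split (@rshift m n b) = inr b.
Proof. exact: (@unsplitK m n (inr b)). Qed.

Lemma adj_l (H : graph) s a b :
  @gadj (add_isolated H s) (lshift s a) (lshift s b) = gadj a b.
Proof. by rewrite /= /addiso_adj !split_l. Qed.

Lemma nedges_iso (H : graph) s : nedges (add_isolated H s) = nedges H.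
Proof.
rewrite /nedges.
pose f := fun p : 'I_(gn H) * 'I_(gn H) => (lshift s p.1, lshift s p.2).
have finj : injective f.
  move=> [a b] [c d] E; have /= /lshift_inj -> := congr1 fst E.
  by have /= /lshift_inj -> := congr1 snd E.
rewrite -(card_imset _ finj); apply: eq_card => -[x y].
rewrite inE; apply/idP/imsetP.
- move/andP=> [lt]; rewrite /= /addiso_adj.
  case E1: (split x) => [a|a] //; case E2: (split y) => [b|b] // ab.
  have Ex : x = lshift s a by rewrite -(splitK x) E1.
  have Ey : y = lshift s b by rewrite -(splitK y) E2.
  exists (a, b); last by rewrite /f Ex Ey.
  by rewrite inE /= ab andbT; move: lt; rewrite Ex Ey.
- move=> [[a b]]; rewrite inE /= => /andP [lt ab] [-> ->].
  by rewrite /= /addiso_adj !split_l ab andbT.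
Qed.

Lemma arrows_down (F G H : graph) s : arrows F G (add_isolated H s) -> arrows F G H.
Proof.
move=> A c csym; case: (A c csym) => [R|[g [ginj gE]]]; [by left|right].
exists (fun x => g (lshift s x)); split.
  by move=> x y /ginj /lshift_inj.
by move=> x y xy; apply: gE; rewrite /= /addiso_adj !split_l.
Qed.

Lemma arrows_up (F G H : graph) s :
  arrows F G H -> arrows (add_isolated F s) G (add_isolated H s).
Proof.
move=> A c' csym.
pose c := fun a b : 'I_(gn F) => c' (lshift s a) (lshift s b).
have cs : forall x y, c x y = c y x by move=> x y; rewrite /c csym.
case: (A c cs) => [[f [finj fE]]|[g [ginj gE]]].
- left; exists (fun x => lshift s (f x)); split.
    by move=> x y /lshift_inj /finj.
  by move=> x y xy; rewrite /= /addiso_adj !split_l; apply: fE.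
- right.
  exists (fun z : 'I_(gn H + s) => match split z with
                  | inl a => lshift s (g a) | inr b => rshift (gn F) b end).
  split.
    move=> x y; rewrite -{2}(splitK x) -{2}(splitK y).
    case: (split x) => a; case: (split y) => b /=.
    + by move/lshift_inj/ginj ->.
    + by move/eqP; rewrite eq_lrshift.
    + by move/eqP; rewrite eq_rlshift.
    + by move/rshift_inj ->.
  move=> x y /=; rewrite /addiso_adj.
  case: (split x) => a //; case: (split y) => b // ab.
  by rewrite /= /addiso_adj !split_l; apply: gE.
Qed.

Lemma sr_pred_iso G H s : sr_pred G (add_isolated H s) = sr_pred G H.
Proof.
apply/funext => m; rewrite /sr_pred; apply/asbool_equiv_eq; split.
- by move=> [F [<- A]]; exists F; split => //; apply: arrows_down A.
- move=> [F [<- A]]; exists (add_isolated F s); split.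
    exact: nedges_iso.
  exact: arrows_up.
Qed.

Definition sr_of (P : pred nat) : nat :=
  match pselect (exists m, P m) with
  | left ex => ex_minn ex
  | right _ => 0
  end.

Lemma sr_iso G H s : size_ramsey G (add_isolated H s) = size_ramsey G H.
Proof.
change (sr_of (sr_pred G (add_isolated H s)) = sr_of (sr_pred G H)).
by rewrite sr_pred_iso.
Qed.

Theorem lemma2p5 (H : graph) (s : nat) :
  (0 < nedges H)%N ->
  (forall t : nat, (1 <= t)%N ->
     size_ramsey (matching t) (add_isolated H s) = size_ramsey (matching t) H)
  /\ r_infty (add_isolated H s) = r_infty H.
Proof.
move=> _; split; first by move=> t _; exact: sr_iso.
rewrite /r_infty nedges_iso.
by congr Lim_seq; apply/funext => t; rewrite sr_iso.
Qed.
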